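(* Consider the closed-loop lumped-parameter (0D) circulation model described in the context, and let its state functions be differentiable on $(0,T)$ and satisfy the system (i)–(iii) of the context for all $t\in(0,T)$. Then for all $t\in(0,T)$, $$\frac{d}{dt}\mathcal{M}(t)=\Pi^{\mathrm{act}}(t)+\Pi^{\mathrm{diss}}(t)+\Pi^{\mathrm{ex}}(t),$$ where $\mathcal{M},\Pi^{\mathrm{act}},\Pi^{\mathrm{diss}},\Pi^{\mathrm{ex}}$ are as defined in the context.
   Context: Chamber indices $i\in\{\mathrm{LA},\mathrm{LV},\mathrm{RA},\mathrm{RV}\}$ (left/right atrium/ventricle); vascular indices $j\in\{\mathrm{AR},\mathrm{VEN}\}$, $k\in\{\mathrm{SYS},\mathrm{PUL}\}$. Positive constants $C_j^k,R_j^k,L_j^k$, constants $V_{0,i}$ and $E_i^{\mathrm{pass}}>0$, given functions $E_i^{\mathrm{act}}(t)$ and $p_{\mathrm{EX}}(t)$, and for each valve $v\in\{\mathrm{MV},\mathrm{AV},\mathrm{TV},\mathrm{PV}\}$ a resistance function $R_v(p_1,p_2)=R_{\min}$ if $p_1<p_2$ and $R_{\max}$ if $p_1\ge p_2$, with $0<R_{\min}$, $R_{\max}<\infty$. Set $E_i(t)=E_i^{\mathrm{pass}}+E_i^{\mathrm{act}}(t)$. Unknowns: volumes $V_i(t)$, pressures $p_j^k(t)$, flows $Q_j^k(t)$. (i) Algebraic relations: $p_i=p_{\mathrm{EX}}+E_i(V_i-V_{0,i})$ for each chamber $i$; $Q_{\mathrm{MV}}=\frac{p_{\mathrm{LA}}-p_{\mathrm{LV}}}{R_{\mathrm{MV}}(p_{\mathrm{LA}},p_{\mathrm{LV}})}$,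 $Q_{\mathrm{AV}}=\frac{p_{\mathrm{LV}}-p_{\mathrm{AR}}^{\mathrm{SYS}}}{R_{\mathrm{AV}}(p_{\mathrm{LV}},p_{\mathrm{AR}}^{\mathrm{SYS}})}$, $Q_{\mathrm{TV}}=\frac{p_{\mathrm{RA}}-p_{\mathrm{RV}}}{R_{\mathrm{TV}}(p_{\mathrm{RA}},p_{\mathrm{RV}})}$, $Q_{\mathrm{PV}}=\frac{p_{\mathrm{RV}}-p_{\mathrm{AR}}^{\mathrm{PUL}}}{R_{\mathrm{PV}}(p_{\mathrm{RV}},p_{\mathrm{AR}}^{\mathrm{PUL}})}$. (ii) Chamber and compliance equations: $\dot V_{\mathrm{LA}}=Q_{\mathrm{VEN}}^{\mathrm{PUL}}-Q_{\mathrm{MV}}$, $\dot V_{\mathrm{LV}}=Q_{\mathrm{MV}}-Q_{\mathrm{AV}}$, $\dot V_{\mathrm{RA}}=Q_{\mathrm{VEN}}^{\mathrm{SYS}}-Q_{\mathrm{TV}}$, $\dot V_{\mathrm{RV}}=Q_{\mathrm{TV}}-Q_{\mathrm{PV}}$; $C_{\mathrm{AR}}^{\mathrm{SYS}}\dot p_{\mathrm{AR}}^{\mathrm{SYS}}=Q_{\mathrm{AV}}-Q_{\mathrm{AR}}^{\mathrm{SYS}}$, $C_{\mathrm{VEN}}^{\mathrm{SYS}}\dot p_{\mathrm{VEN}}^{\mathrm{SYS}}=Q_{\mathrm{AR}}^{\mathrm{SYS}}-Q_{\mathrm{VEN}}^{\mathrm{SYS}}$, $C_{\mathrm{AR}}^{\mathrm{PUL}}\dot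 p_{\mathrm{AR}}^{\mathrm{PUL}}=Q_{\mathrm{PV}}-Q_{\mathrm{AR}}^{\mathrm{PUL}}$, $C_{\mathrm{VEN}}^{\mathrm{PUL}}\dot p_{\mathrm{VEN}}^{\mathrm{PUL}}=Q_{\mathrm{AR}}^{\mathrm{PUL}}-Q_{\mathrm{VEN}}^{\mathrm{PUL}}$. (iii) Inductance equations: $\frac{L_{\mathrm{AR}}^{\mathrm{SYS}}}{R_{\mathrm{AR}}^{\mathrm{SYS}}}\dot Q_{\mathrm{AR}}^{\mathrm{SYS}}=-Q_{\mathrm{AR}}^{\mathrm{SYS}}-\frac{p_{\mathrm{VEN}}^{\mathrm{SYS}}-p_{\mathrm{AR}}^{\mathrm{SYS}}}{R_{\mathrm{AR}}^{\mathrm{SYS}}}$, $\frac{L_{\mathrm{VEN}}^{\mathrm{SYS}}}{R_{\mathrm{VEN}}^{\mathrm{SYS}}}\dot Q_{\mathrm{VEN}}^{\mathrm{SYS}}=-Q_{\mathrm{VEN}}^{\mathrm{SYS}}-\frac{p_{\mathrm{RA}}-p_{\mathrm{VEN}}^{\mathrm{SYS}}}{R_{\mathrm{VEN}}^{\mathrm{SYS}}}$, $\frac{L_{\mathrm{AR}}^{\mathrm{PUL}}}{R_{\mathrm{AR}}^{\mathrm{PUL}}}\dot Q_{\mathrm{AR}}^{\mathrm{PUL}}=-Q_{\mathrm{AR}}^{\mathrm{PUL}}-\frac{p_{\mathrm{VEN}}^{\mathrm{PUL}}-p_{\mathrm{AR}}^{\mathrm{PUL}}}{R_{\mathrm{AR}}^{\mathrm{PUL}}}$,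 $\frac{L_{\mathrm{VEN}}^{\mathrm{PUL}}}{R_{\mathrm{VEN}}^{\mathrm{PUL}}}\dot Q_{\mathrm{VEN}}^{\mathrm{PUL}}=-Q_{\mathrm{VEN}}^{\mathrm{PUL}}-\frac{p_{\mathrm{LA}}-p_{\mathrm{VEN}}^{\mathrm{PUL}}}{R_{\mathrm{VEN}}^{\mathrm{PUL}}}$. Energies and powers: $\mathcal{M}=\sum_i\mathcal{E}_i+\sum_{j,k}(\mathcal{E}_j^k+\mathcal{K}_j^k)$ with $\mathcal{E}_i=\tfrac12E_i^{\mathrm{pass}}(V_i-V_{0,i})^2$, $\mathcal{E}_j^k=\tfrac12C_j^k(p_j^k)^2$, $\mathcal{K}_j^k=\tfrac12L_j^k(Q_j^k)^2$. $\Pi^{\mathrm{act}}=\sum_i\Pi_i^{\mathrm{act}}$ with $\Pi_i^{\mathrm{act}}=-E_i^{\mathrm{act}}(V_i-V_{0,i})\dot V_i$. $\Pi^{\mathrm{ex}}=\sum_i(-p_{\mathrm{EX}}\dot V_i)$. $\Pi^{\mathrm{diss}}=\Pi_{\mathrm{MV}}+\Pi_{\mathrm{AV}}+\Pi_{\mathrm{TV}}+\Pi_{\mathrm{PV}}+\sum_{j,k}\Pi_j^k$, with $\Pi_j^k=-R_j^k(Q_j^k)^2$, $\Pi_{\mathrm{MV}}=-\frac{(p_{\mathrm{LA}}-p_{\mathrm{LV}})^2}{R_{\mathrm{MV}}(p_{\mathrm{LA}},p_{\mathrm{LV}})}$, $\Pi_{\mathrm{AV}}=-\frac{(p_{\mathrm{LV}}-p_{\mathrm{AR}}^{\mathrm{SYS}})^2}{R_{\mathrm{AV}}(p_{\mathrm{LV}},p_{\mathrm{AR}}^{\mathrm{SYS}})}$,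 $\Pi_{\mathrm{TV}}=-\frac{(p_{\mathrm{RA}}-p_{\mathrm{RV}})^2}{R_{\mathrm{TV}}(p_{\mathrm{RA}},p_{\mathrm{RV}})}$, $\Pi_{\mathrm{PV}}=-\frac{(p_{\mathrm{RV}}-p_{\mathrm{AR}}^{\mathrm{PUL}})^2}{R_{\mathrm{PV}}(p_{\mathrm{RV}},p_{\mathrm{AR}}^{\mathrm{PUL}})}$. *)

(* Defs.v *)
From Stdlib Require Import Reals.
Open Scope R_scope.

Inductive chamber := LA | LV | RA | RV.
(* Vascular compartments: j in {AR, VEN}, k in {SYS, PUL}. *)
Inductive vjk := ARSYS | VENSYS | ARPUL | VENPUL.
Inductive valve := MV | AV | TV | PV.

Definition sum_ch (f : chamber -> R) : R := f LA + f LV + f RA + f RV.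
Definition sum_jk (f : vjk -> R) : R := f ARSYS + f VENSYS + f ARPUL + f VENPUL.
Definition sum_valve (f : valve -> R) : R := f MV + f AV + f TV + f PV.

Definition Rvalve (Rmin Rmax : R) (p1 p2 : R) : R :=
  if Rlt_dec p1 p2 then Rmin else Rmax.

(* Main.v *)
Require Import Defs.
From Stdlib Require Import Reals Lra.
Open Scope R_scope.


Lemma dplus (f g : R -> R) x a b : derivable_pt_lim f x a -> derivable_pt_lim g x b ->
  derivable_pt_lim (fun y => f y + g y) x (a + b).
Proof. intros. apply (derivable_pt_lim_plus f g); auto. Qed.

Lemma dsq (f : R -> R) k c x df : derivable_pt_lim f x df ->
  derivable_pt_lim (fun y => / 2 * k * (f y - c) ^ 2) x (k * (f x - c) * df).
Proof.
  intro H.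
  assert (H1 : derivable_pt_lim (fun y => f y - c) x df).
  { replace df with (df - 0) by ring.
    apply (derivable_pt_lim_minus f (fun _ => c)); auto. apply derivable_pt_lim_const. }
  assert (H2 := derivable_pt_lim_comp (fun y => f y - c) (fun z => z ^ 2) x df (INR 2 * (f x - c) ^ (2 - 1)) H1 (derivable_pt_lim_pow (f x - c) 2)).
  assert (H3 := derivable_pt_lim_scal _ (/2 * k) x _ H2).
  unfold mult_real_fct, comp in H3.
  replace (k * (f x - c) * df) with (/ 2 * k * (INR 2 * (f x - c) ^ (2 - 1) * df)).
  - exact H3.
  - simpl. field.
Qed.

Lemma dsq0 (f : R -> R) k x df : derivable_pt_lim f x df ->
  derivable_pt_lim (fun y => / 2 * k * (f y) ^ 2) x (k * (f x - 0) * df).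
Proof.
  intro H. apply derivable_pt_lim_ext with (f := fun y => / 2 * k * (f y - 0) ^ 2).
  - intro y. rewrite Rminus_0_r. reflexivity.
  - apply dsq; auto.
Qed.

Theorem proposition1
  (T : R)
  (* positive constants C_j^k, R_j^k, L_j^k *)
  (C Rres L : vjk -> R)
  (HC : forall c, 0 < C c) (HR : forall c, 0 < Rres c) (HL : forall c, 0 < L c)
  (* chamber constants *)
  (V0 Epass : chamber -> R) (HEpass : forall i, 0 < Epass i)
  (* given functions *)
  (Eact : chamber -> R -> R) (pEX : R -> R)
  (* valve resistances *)
  (Rmin Rmax : valve -> R)
  (HRmin : forall v, 0 < Rmin v) (HRmax : forall v, 0 < Rmax v)
  (* unknowns: volumes, chamber pressures, vascular pressures and flows,
     valve flows, together with their derivatives *)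
  (V : chamber -> R -> R) (dV : chamber -> R -> R)
  (pch : chamber -> R -> R)
  (p : vjk -> R -> R) (dp : vjk -> R -> R)
  (Q : vjk -> R -> R) (dQ : vjk -> R -> R)
  (Qv : valve -> R -> R)
  (* differentiability on (0,T) *)
  (HdV : forall i t, 0 < t < T -> derivable_pt_lim (V i) t (dV i t))
  (Hdp : forall c t, 0 < t < T -> derivable_pt_lim (p c) t (dp c t))
  (HdQ : forall c t, 0 < t < T -> derivable_pt_lim (Q c) t (dQ c t))
  (* (i) algebraic relations *)
  (Hpch : forall i t, 0 < t < T ->
     pch i t = pEX t + (Epass i + Eact i t) * (V i t - V0 i))
  (HQMV : forall t, 0 < t < T ->
     Qv MV t = (pch LA t - pch LV t) / Rvalve (Rmin MV) (Rmax MV) (pch LA t) (pch LV t))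
  (HQAV : forall t, 0 < t < T ->
     Qv AV t = (pch LV t - p ARSYS t) / Rvalve (Rmin AV) (Rmax AV) (pch LV t) (p ARSYS t))
  (HQTV : forall t, 0 < t < T ->
     Qv TV t = (pch RA t - pch RV t) / Rvalve (Rmin TV) (Rmax TV) (pch RA t) (pch RV t))
  (HQPV : forall t, 0 < t < T ->
     Qv PV t = (pch RV t - p ARPUL t) / Rvalve (Rmin PV) (Rmax PV) (pch RV t) (p ARPUL t))
  (* (ii) chamber and compliance equations *)
  (HLA : forall t, 0 < t < T -> dV LA t = Q VENPUL t - Qv MV t)
  (HLV : forall t, 0 < t < T -> dV LV t = Qv MV t - Qv AV t)
  (HRA : forall t, 0 < t < T -> dV RA t = Q VENSYS t - Qv TV t)
  (HRV : forall t, 0 < t < T -> dV RV t = Qv TV t - Qv PV t)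
  (HCARSYS : forall t, 0 < t < T -> C ARSYS * dp ARSYS t = Qv AV t - Q ARSYS t)
  (HCVENSYS : forall t, 0 < t < T -> C VENSYS * dp VENSYS t = Q ARSYS t - Q VENSYS t)
  (HCARPUL : forall t, 0 < t < T -> C ARPUL * dp ARPUL t = Qv PV t - Q ARPUL t)
  (HCVENPUL : forall t, 0 < t < T -> C VENPUL * dp VENPUL t = Q ARPUL t - Q VENPUL t)
  (* (iii) inductance equations *)
  (HLARSYS : forall t, 0 < t < T ->
     L ARSYS / Rres ARSYS * dQ ARSYS t
     = - Q ARSYS t - (p VENSYS t - p ARSYS t) / Rres ARSYS)
  (HLVENSYS : forall t, 0 < t < T ->
     L VENSYS / Rres VENSYS * dQ VENSYS t
     = - Q VENSYS t - (pch RA t - p VENSYS t) / Rres VENSYS)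
  (HLARPUL : forall t, 0 < t < T ->
     L ARPUL / Rres ARPUL * dQ ARPUL t
     = - Q ARPUL t - (p VENPUL t - p ARPUL t) / Rres ARPUL)
  (HLVENPUL : forall t, 0 < t < T ->
     L VENPUL / Rres VENPUL * dQ VENPUL t
     = - Q VENPUL t - (pch LA t - p VENPUL t) / Rres VENPUL) :
  let M := fun t =>
    sum_ch (fun i => / 2 * Epass i * (V i t - V0 i) ^ 2)
    + sum_jk (fun c => / 2 * C c * (p c t) ^ 2 + / 2 * L c * (Q c t) ^ 2) in
  let Pi_act := fun t => sum_ch (fun i => - Eact i t * (V i t - V0 i) * dV i t) in
  let Pi_ex := fun t => sum_ch (fun i => - pEX t * dV i t) in
  let Pi_diss := fun t =>
    - (pch LA t - pch LV t) ^ 2 / Rvalve (Rmin MV) (Rmax MV) (pch LA t) (pch LV t)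
    - (pch LV t - p ARSYS t) ^ 2 / Rvalve (Rmin AV) (Rmax AV) (pch LV t) (p ARSYS t)
    - (pch RA t - pch RV t) ^ 2 / Rvalve (Rmin TV) (Rmax TV) (pch RA t) (pch RV t)
    - (pch RV t - p ARPUL t) ^ 2 / Rvalve (Rmin PV) (Rmax PV) (pch RV t) (p ARPUL t)
    + sum_jk (fun c => - Rres c * (Q c t) ^ 2) in
  forall t, 0 < t < T ->
    derivable_pt_lim M t (Pi_act t + Pi_diss t + Pi_ex t).
Proof.
  intros M Pi_act Pi_ex Pi_diss t Ht.
  assert (HD : derivable_pt_lim M t
    ((Epass LA * (V LA t - V0 LA) * dV LA t + Epass LV * (V LV t - V0 LV) * dV LV t
      + Epass RA * (V RA t - V0 RA) * dV RA t + Epass RV * (V RV t - V0 RV) * dV RV t)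
   + ((C ARSYS * (p ARSYS t - 0) * dp ARSYS t + L ARSYS * (Q ARSYS t - 0) * dQ ARSYS t)
     + (C VENSYS * (p VENSYS t - 0) * dp VENSYS t + L VENSYS * (Q VENSYS t - 0) * dQ VENSYS t)
     + (C ARPUL * (p ARPUL t - 0) * dp ARPUL t + L ARPUL * (Q ARPUL t - 0) * dQ ARPUL t)
     + (C VENPUL * (p VENPUL t - 0) * dp VENPUL t + L VENPUL * (Q VENPUL t - 0) * dQ VENPUL t)))).
  { unfold M, sum_ch, sum_jk.
    repeat apply dplus; first [apply dsq0 | apply dsq]; auto. }
  eapply derivable_pt_lim_ext in HD; [| intro; reflexivity].
  match goal with |- derivable_pt_lim _ _ ?G => replace G with
    ((Epass LA * (V LA t - V0 LA) * dV LA t + Epass LV * (V LV t - V0 LV) * dV LV t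
      + Epass RA * (V RA t - V0 RA) * dV RA t + Epass RV * (V RV t - V0 RV) * dV RV t)
   + ((C ARSYS * (p ARSYS t - 0) * dp ARSYS t + L ARSYS * (Q ARSYS t - 0) * dQ ARSYS t)
     + (C VENSYS * (p VENSYS t - 0) * dp VENSYS t + L VENSYS * (Q VENSYS t - 0) * dQ VENSYS t)
     + (C ARPUL * (p ARPUL t - 0) * dp ARPUL t + L ARPUL * (Q ARPUL t - 0) * dQ ARPUL t)
     + (C VENPUL * (p VENPUL t - 0) * dp VENPUL t + L VENPUL * (Q VENPUL t - 0) * dQ VENPUL t))) end.
  { exact HD. }
  clear HD.
  unfold Pi_act, Pi_diss, Pi_ex, sum_ch, sum_jk.
  assert (C1 := HC ARSYS). assert (C2 := HC VENSYS). assert (C3 := HC ARPUL). assert (C4 := HC VENPUL).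
  assert (R1 := HR ARSYS). assert (R2 := HR VENSYS). assert (R3 := HR ARPUL). assert (R4 := HR VENPUL).
  assert (L1 := HL ARSYS). assert (L2 := HL VENSYS). assert (L3 := HL ARPUL). assert (L4 := HL VENPUL).
  assert (E1 : dp ARSYS t = (Qv AV t - Q ARSYS t) / C ARSYS).
  { rewrite <- HCARSYS by exact Ht. field. lra. }
  assert (E2 : dp VENSYS t = (Q ARSYS t - Q VENSYS t) / C VENSYS).
  { rewrite <- HCVENSYS by exact Ht. field. lra. }
  assert (E3 : dp ARPUL t = (Qv PV t - Q ARPUL t) / C ARPUL).
  { rewrite <- HCARPUL by exact Ht. field. lra. }
  assert (E4 : dp VENPUL t = (Q ARPUL t - Q VENPUL t) / C VENPUL).
  { rewrite <- HCVENPUL by exact Ht. field. lra. }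
  assert (F1 : dQ ARSYS t = (- Q ARSYS t - (p VENSYS t - p ARSYS t) / Rres ARSYS) / (L ARSYS / Rres ARSYS)).
  { rewrite <- HLARSYS by exact Ht. field. lra. }
  assert (F2 : dQ VENSYS t = (- Q VENSYS t - (pch RA t - p VENSYS t) / Rres VENSYS) / (L VENSYS / Rres VENSYS)).
  { rewrite <- HLVENSYS by exact Ht. field. lra. }
  assert (F3 : dQ ARPUL t = (- Q ARPUL t - (p VENPUL t - p ARPUL t) / Rres ARPUL) / (L ARPUL / Rres ARPUL)).
  { rewrite <- HLARPUL by exact Ht. field. lra. }
  assert (F4 : dQ VENPUL t = (- Q VENPUL t - (pch LA t - p VENPUL t) / Rres VENPUL) / (L VENPUL / Rres VENPUL)).
  { rewrite <- HLVENPUL by exact Ht. field. lra. }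
  rewrite E1, E2, E3, E4, F1, F2, F3, F4.
  rewrite (HLA t Ht), (HLV t Ht), (HRA t Ht), (HRV t Ht).
  rewrite (HQMV t Ht), (HQAV t Ht), (HQTV t Ht), (HQPV t Ht).
  assert (P1 : 0 < Rvalve (Rmin MV) (Rmax MV) (pch LA t) (pch LV t)).
  { unfold Rvalve; destruct Rlt_dec; auto. }
  assert (P2 : 0 < Rvalve (Rmin AV) (Rmax AV) (pch LV t) (p ARSYS t)).
  { unfold Rvalve; destruct Rlt_dec; auto. }
  assert (P3 : 0 < Rvalve (Rmin TV) (Rmax TV) (pch RA t) (pch RV t)).
  { unfold Rvalve; destruct Rlt_dec; auto. }
  assert (P4 : 0 < Rvalve (Rmin PV) (Rmax PV) (pch RV t) (p ARPUL t)).
  { unfold Rvalve; destruct Rlt_dec; auto. }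
  revert P1 P2 P3 P4.
  generalize (Rvalve (Rmin MV) (Rmax MV) (pch LA t) (pch LV t)) as r1.
  generalize (Rvalve (Rmin AV) (Rmax AV) (pch LV t) (p ARSYS t)) as r2.
  generalize (Rvalve (Rmin TV) (Rmax TV) (pch RA t) (pch RV t)) as r3.
  generalize (Rvalve (Rmin PV) (Rmax PV) (pch RV t) (p ARPUL t)) as r4.
  intros r4 r3 r2 r1 P1 P2 P3 P4.
  rewrite !(Hpch _ t Ht).
  field. repeat split; lra.
Qed.
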